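(* Let $T$ be a tree. Two elements $\mathfrak p,\mathfrak p'\in\mathfrak P_T$ satisfy $\mathfrak p\ge\mathfrak p'$ if and only if $\mathsf L_T(\mathfrak p')$ intersects the closure of $\mathsf L_T(\mathfrak p)$ in $\mathsf L_T$. If this holds, then $\mathsf L_T(\mathfrak p')$ is contained in the closure of $\mathsf L_T(\mathfrak p)$.
   Context: A tree is a nonempty finite connected acyclic graph with vertex set $V(T)$ and edge set $E(T)$ (two-element subsets of $V(T)$). Subgraphs are full (vertex-induced); a subtree is a subgraph which is a tree. A quotient tree $S\twoheadrightarrow R$ is a tree $R$ with a surjection $V(S)\to V(R)$ whose fibers are vertex sets of subtrees, vertices of $R$ adjacent iff an edge of $S$ joins their fibers. Arboreal singularity: for $\alpha\in V(T)$ let $\mathsf L_T(\alpha)=\mathbb R^{V(T)\setminus\{\alpha\}}$ with coordinates $x_\gamma(\alpha)$; $\mathsf L_T$ is the quotient of $\coprod_\alpha\mathsf L_T(\alpha)$ by the equivalence relation generated by identifying, for each edge $\{\alpha,\beta\}$, $\{x_\gamma(\alpha)\}\sim\{x_\gamma(\beta)\}$ whenever $x_\beta(\alpha)=x_\alpha(\beta)\ge0$ and $x_\gamma(\alpha)=x_\gamma(\beta)$ for $\gamma\ne\alpha,\beta$; each $\mathsf L_T(\alpha)$ is regarded as a subspace of $\mathsf L_T$. For $x\in\mathsf L_T$: $S_x$ is the full subgraph on $\{\alpha:x\in\mathsf L_T(\alpha)\}$, and $R_x$ is the quotient of $S_x$ contracting exactly the edges $\{\alpha,\beta\}\in E(S_x)$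 with $x_\beta(\alpha)=x_\alpha(\beta)>0$ at $x$. Poset $\mathfrak P_T$: elements are correspondences $\mathfrak p=(R\overset{q}{\twoheadleftarrow}S\overset{i}{\hookrightarrow}T)$, $i$ inclusion of a subtree, $q$ a quotient of trees (equivalently a subtree $S$ with a partition of $S$ into subtrees). Composition: for $\mathfrak q=(P\twoheadleftarrow Q\hookrightarrow R)$, $\mathfrak q\circ\mathfrak p=(P\twoheadleftarrow Q\times_RS\hookrightarrow T)$, where $Q\times_RS$ is the subtree of $S$ on vertices mapping into $Q$, included in $T$ via $S$ and mapped to $P$ via $Q$. Order: $\mathfrak p\ge\mathfrak p'$ iff $\mathfrak p=\mathfrak q\circ\mathfrak p'$ for some correspondence $\mathfrak q$ of the same kind. $\mathsf L_T(\mathfrak p)=\{x:(R_x\twoheadleftarrow S_x\hookrightarrow T)=\mathfrak p\}$. *)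

(* Defs.v *)
From HB Require Import structures.
From mathcomp Require Import all_boot all_order all_algebra.
From mathcomp Require Import reals.
From Stdlib Require Import Relations.Relation_Operators.
Set Implicit Arguments. Unset Strict Implicit. Unset Printing Implicit Defensive.
Import Order.TTheory GRing.Theory Num.Theory.
Local Open Scope ring_scope.

Section Defs.
Variable V : finType.
Variable e : rel V.

Definition induced (S : {set V}) : rel V :=
  [rel x y | [&& e x y, x \in S & y \in S]].

(* S spans a subtree: nonempty and its full subgraph is connected
   (acyclicity is inherited from the ambient tree). *)
Definition subtree (S : {set V}) : Prop :=
  S != set0 /\ forall x y, x \in S -> y \in S -> connect (induced S) x y.

(* A correspondence R <<- S ->> T, encoded as a subtree S together with a
   partition P of S into subtrees (the fibers of S ->> R). *)
Definition is_corr (S : {set V}) (P : {set {set V}}) : Prop :=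
  [/\ subtree S, partition P S & forall B, B \in P -> subtree B].
End Defs.

Definition is_tree (T : finType) (E : rel T) : Prop :=
  [/\ (0 < #|T|)%N, symmetric E, irreflexive E,
      (forall x y, connect E x y) &
      (forall c : seq T, uniq c -> (2 < size c)%N -> ~~ cycle E c)].

(* Vertices of the quotient tree of (S', P') are the blocks of P' : {set {set T}};
   two distinct blocks are adjacent iff an edge of T joins them. *)
Definition quot_adj (T : finType) (E : rel T) (P : {set {set T}}) : rel {set T} :=
  [rel B C | [&& B \in P, C \in P, B != C &
              [exists x in B, exists y in C, E x y]]].

(* p = (S,P) >= p' = (S',P') iff p = q o p' for some correspondence
   q = (Pq <<- Q ->> R') on the quotient tree R' of p'. The composite is the
   subtree  Q x_R' S' = cover Q  of T, with partition given by the fibers of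
   the map to Pq, i.e. { cover pi | pi in Pi }. *)
Definition corr_ge (T : finType) (E : rel T)
    (S : {set T}) (P : {set {set T}}) (S' : {set T}) (P' : {set {set T}}) : Prop :=
  exists (Q : {set {set T}}) (Pi : {set {set {set T}}}),
    [/\ Q \subset P', is_corr (quot_adj E P') Q Pi,
        S = cover Q & P = [set cover pi | pi in Pi]].

Section Arboreal.
Variable R : realType.
Variable T : finType.
Variable E : rel T.

(* A point of the disjoint union  coprod_alpha L_T(alpha)  is a pair (alpha, v)
   with v : T -> R and the normalisation v alpha = 0, so that v encodes the
   coordinates x_gamma(alpha), gamma <> alpha, i.e. a point of R^(V(T)\{alpha}). *)
Definition prept := (T * (T -> R))%type.
Definition valid (p : prept) : Prop := p.2 p.1 = 0.

Definition glue (p q : prept) : Prop :=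
  [/\ E p.1 q.1, valid p, valid q,
      p.2 q.1 = q.2 p.1 /\ 0 <= p.2 q.1 &
      forall g, g != p.1 -> g != q.1 -> p.2 g = q.2 g].

(* the equivalence relation generated; L_T is the quotient by it *)
Definition Leq : prept -> prept -> Prop := clos_refl_sym_trans prept glue.

(* Quotient topology: U (a set of points of the disjoint union) is open in L_T
   iff it is saturated and each preimage in L_T(alpha) = R^(V\{alpha}) is open. *)
Definition Lopen (U : prept -> Prop) : Prop :=
  (forall p q, Leq p q -> U p -> U q) /\
  (forall a (v : T -> R), v a = 0 -> U (a, v) ->
     exists2 eps : R, 0 < eps &
       forall w : T -> R, w a = 0 -> (forall g, `|w g - v g| < eps) -> U (a, w)).

(* closure in L_T of a saturated set A *)
Definition Lclosure (A : prept -> Prop) (x : prept) : Prop :=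
  valid x /\ forall U, Lopen U -> U x -> exists y, [/\ valid y, U y & A y].

Definition inL (x : prept) (a : T) : Prop :=
  exists v : T -> R, valid (a, v) /\ Leq (a, v) x.

Definition contracted (x : prept) (a b : T) : Prop :=
  [/\ E a b, inL x a, inL x b &
      exists v w : T -> R, [/\ valid (a, v) /\ valid (b, w), Leq (a, v) x,
                                Leq (b, w) x, v b = w a & 0 < v b]].

(* L_T(p) for p = (S,P):  S_x = S  and the fibers of S_x ->> R_x
   (the classes of the equivalence generated by contracted edges) are
   exactly the blocks of P. *)
Definition stratum (S : {set T}) (P : {set {set T}}) (x : prept) : Prop :=
  [/\ valid x,
      (forall a, a \in S <-> inL x a) &
      (forall a b, a \in S -> b \in S ->
         ((exists2 B, B \in P & (a \in B) && (b \in B)) <->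
          clos_refl_sym_trans T (contracted x) a b))].
End Arboreal.

Arguments stratum R {T} E S P x.
Arguments Lclosure {R T} E A x.

(* Main.v *)
Require Import Defs.
From HB Require Import structures.
From mathcomp Require Import all_boot all_order all_algebra.
From mathcomp Require Import reals.
From Stdlib Require Import Relations.Relation_Operators Classical.
Set Implicit Arguments. Unset Strict Implicit. Unset Printing Implicit Defensive.

Module A.
Set Implicit Arguments. Unset Strict Implicit. Unset Printing Implicit Defensive.

Section Graph.
Variable T : finType.

Lemma conn_closed (r : rel T) (Pr : T -> Prop) x y :
  (forall u v, r u v -> Pr u -> Pr v) -> connect r x y -> Pr x -> Pr y.
Proof.
move=> H /connectP [p pth ->]; elim: p x pth => [|z p IH] x //= /andP [rxz pth] Px.
exact: IH pth (H _ _ rxz Px).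
Qed.

Definition avoid (r : rel T) (g : T) : rel T :=
  [rel u v | r u v && (u != g) && (v != g)].

Lemma connect_avoid (r : rel T) g x y :
  connect r x y -> connect r g y \/ connect (avoid r g) x y.
Proof.
move=> /connectP [p pth ->]; elim: p x pth => [|z p IH] x /=.
  by move=> _; right; exact: connect0.
move=> /andP [rxz pth].
case: (eqVneq x g) => [xg|xg].
  by left; rewrite -xg; apply/connectP; exists (z :: p) => //=; rewrite rxz.
have [zg|zg] := eqVneq z g.
  by left; rewrite -zg; apply/connectP; exists p.
case: (IH z pth) => [h|h]; first by left.
right; apply: connect_trans h; by apply: connect1; rewrite /avoid /= rxz xg zg.
Qed.

Lemma rst_connect (r : T -> T -> Prop) (r' : rel T) x y :
  symmetric r' -> (forall u v, r u v -> r' u v) ->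
  clos_refl_sym_trans T r x y -> connect r' x y.
Proof.
move=> sr' sub; elim => [u v /sub /connect1|u|u v _ h|u v w _ h1 _ h2] //.
- by rewrite (sym_connect_sym sr').
- exact: connect_trans h1 h2.
Qed.

Lemma connect_rst (r : rel T) x y : connect r x y -> clos_refl_sym_trans T r x y.
Proof.
move=> /connectP [p pth ->]; elim: p x pth => [|z p IH] x /=.
  by move=> _; apply: rst_refl.
move=> /andP [rxz pth]; apply: rst_trans (IH _ pth); exact: rst_step.
Qed.

Lemma connect_map (U : finType) (r : rel T) (r' : rel U) (f : T -> U) x y :
  (forall u v, r u v -> f u = f v \/ r' (f u) (f v)) ->
  connect r x y -> connect r' (f x) (f y).
Proof.
move=> H /connectP [p pth ->]; elim: p x pth => [|z p IH] x /=.
  by move=> _; exact: connect0.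
move=> /andP [rxz pth]; apply: connect_trans (IH _ pth).
by case: (H _ _ rxz) => [->|/connect1].
Qed.

Variable E : rel T.
Hypothesis Esym : symmetric E.
Hypothesis Eirr : irreflexive E.
Hypothesis Econn : forall x y, connect E x y.
Hypothesis Eacyc : forall c : seq T, uniq c -> (2 < size c)%N -> ~~ cycle E c.

Definition Em (g h : T) : rel T :=
  [rel x y | E x y && ~~ ((x == g) && (y == h) || (x == h) && (y == g))].

Lemma Em_sym g h : symmetric (Em g h).
Proof.
move=> x y; rewrite /Em /= Esym; congr (_ && ~~ _).
by rewrite orbC; congr (_ || _); rewrite andbC.
Qed.

Lemma EmC g h : Em g h =2 Em h g.
Proof. by move=> x y; rewrite /Em /= orbC. Qed.

Lemma connEmC g h : connect (Em g h) =2 connect (Em h g).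
Proof. exact/eq_connect/EmC. Qed.

Lemma Em_sub g h x y : Em g h x y -> E x y.
Proof. by case/andP. Qed.

Lemma Em_path g h x p : path (Em g h) x p -> path E x p.
Proof.
elim: p x => [|y p IH] x //= /andP [/Em_sub -> /IH] //.
Qed.

Lemma T2 g h : E g h -> ~~ connect (Em g h) g h.
Proof.
move=> Egh; apply/negP => /connectP [p pth hl].
case: (shortenP pth) hl => p' pth' up' _ hl'.
have gh : g != h by apply/eqP => e; rewrite e Eirr in Egh.
case: p' pth' up' hl' => [|z [|z' p'']] /=.
- by move=> _ _ hg; rewrite hg eqxx in gh.
- move=> /andP [/andP [_ H] _] _ hz; move: H; rewrite -hz !eqxx //.
move=> pth' up' hl'.
have /negP := Eacyc (c := [:: g, z, z' & p'']) up' isT; apply.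
rewrite /cycle rcons_path; apply/andP; split.
  exact: (Em_path (p := [:: z, z' & p'']) pth').
by rewrite /= -hl' Esym.
Qed.

Lemma T1 g h a : E g h -> connect (Em g h) a g || connect (Em g h) a h.
Proof.
move=> Egh.
pose D z := connect (Em g h) z g || connect (Em g h) z h.
have cs := sym_connect_sym (Em_sym g h).
suff H : D g -> D a by apply: H; rewrite /D connect0.
apply: (conn_closed (r := E) (Pr := fun z => is_true (D z)) (x := g) (y := a)) (Econn g a) => u v Euv.
case Huv: (Em g h u v).
  have cuv : connect (Em g h) v u by rewrite cs; apply: connect1.
  by rewrite /D => /orP [] h1; apply/orP; [left|right]; apply: connect_trans cuv h1.
move: Huv; rewrite /Em /= Euv /= => /negbFE /orP [] /andP [/eqP -> /eqP ->]; by rewrite /D !connect0 ?orbT.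
Qed.

Lemma T12 g h a : E g h -> connect (Em g h) a h -> ~~ connect (Em g h) a g.
Proof.
move=> Egh ah; apply/negP => ag; have := T2 Egh; rewrite (sym_connect_sym (Em_sym g h)) in ag.
by rewrite (connect_trans ag ah).
Qed.

Lemma near_uniq g h1 h2 a : E g h1 -> E g h2 ->
  connect (Em g h1) a h1 -> connect (Em g h2) a h2 -> h1 = h2.
Proof.
move=> E1 E2 c1 c2; apply/eqP/negPn/negP => h12.
case: (connect_avoid g c2) => [gh|ah2]; first by have := T2 E2; rewrite gh.
have c3 : connect (Em g h1) a h2.
  apply: connect_sub ah2 => u v /= /andP [/andP [/andP [Euv _] ug] vg].
  by apply: connect1; rewrite /Em /= Euv (negbTE ug) (negbTE vg) !andbF.
have c4 : connect (Em g h1) a g.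
  apply: connect_trans c3 (connect1 _); rewrite /Em /= Esym E2 /=.
  have h2g : (h2 == g) = false by apply/negbTE/eqP => e; rewrite e Eirr in E2.
  by rewrite h2g /= eq_sym (negbTE h12).
by have := T12 E1 c1; rewrite c4.
Qed.

End Graph.

End A.
Import A.

Set Implicit Arguments. Unset Strict Implicit. Unset Printing Implicit Defensive.
Import Order.TTheory GRing.Theory Num.Theory.
Local Open Scope ring_scope.

Section Arb.
Variable R : realType.
Variable T : finType.
Variable E : rel T.
Hypothesis Esym : symmetric E.
Hypothesis Eirr : irreflexive E.
Hypothesis Econn : forall x y, connect E x y.
Hypothesis Eacyc : forall c : seq T, uniq c -> (2 < size c)%N -> ~~ cycle E c.

Notation pt := (prept R T).
Let t1 := T1 Esym Econn.
Let t2 := T2 Esym Eirr Eacyc.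
Let t12 := T12 Esym Eirr Eacyc.
Let nu := near_uniq Esym Eirr Eacyc.
Notation Em := (Em E).

Definition Lab (p : pt) g h : R := if connect (Em g h) p.1 h then p.2 g else p.2 h.

Lemma Lab_sym p g h : E g h -> Lab p g h = Lab p h g.
Proof.
move=> Egh; rewrite /Lab -(connEmC E g h).
case: ifP => c1.
  by rewrite (negbTE (t12 Egh c1)).
by have := t1 p.1 Egh; rewrite c1 orbF => ->.
Qed.

Lemma Lab_own a (v : T -> R) b : E a b -> Lab (a, v) a b = v b.
Proof. by move=> Eab; rewrite /Lab /= (negbTE (t2 Eab)). Qed.

Lemma glue_Lab p q : glue E p q -> forall g h, E g h -> Lab p g h = Lab q g h.
Proof.
case: p q => [a v] [b w] [/= Eab _ _ [vw _] oth] g h Egh.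
have ab : a != b by apply/eqP => e; rewrite e Eirr in Eab.
have cs := sym_connect_sym (Em_sym Esym g h).
case: (boolP ((g == a) && (h == b) || (g == b) && (h == a))) => [/orP [] /andP [/eqP eg /eqP eh]|ne].
- by rewrite eg eh Lab_own // /Lab /= connect0.
- have Eba : E b a by rewrite Esym.
  by rewrite eg eh [Lab (a, v) b a]Lab_sym // !Lab_own.
have Em_ab : Em g h a b.
  rewrite /A.Em /= Eab /=; apply: contra ne => /orP [] /andP [/eqP -> /eqP ->];
    by rewrite !eqxx ?orbT.
have same z : connect (Em g h) a z = connect (Em g h) b z.
  apply/idP/idP => c; last by apply: connect_trans (connect1 Em_ab) c.
  by apply: connect_trans c; rewrite cs; apply: connect1.
rewrite /Lab /= -same.
case: ifP => c1.
  apply: oth.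
  - apply/eqP => e; have := t12 Egh c1; by rewrite e connect0.
  - apply/eqP => e; have := t12 Egh c1; by rewrite same e connect0.
have c2 := t1 a Egh; rewrite c1 orbF in c2.
apply: oth.
- by apply/eqP => e; move: c1; rewrite -e connect0.
- by apply/eqP => e; move: c1; rewrite same -e connect0.
Qed.


Definition nn (p : pt) : rel T := [rel g h | E g h && (0 <= Lab p g h)].

Lemma nn_sym p : symmetric (nn p).
Proof.
move=> g h; rewrite /nn /= Esym; case Ehg: (E h g) => //=.
by rewrite Lab_sym // Esym.
Qed.

Lemma eq_nn p q : (forall g h, E g h -> Lab p g h = Lab q g h) -> nn p =2 nn q.
Proof. by move=> H g h; rewrite /nn /=; case Egh: (E g h) => //=; rewrite H. Qed.

Definition Inv (p q : pt) : Prop := p = q \/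
  [/\ valid p, valid q, (forall g h, E g h -> Lab p g h = Lab q g h) &
      connect (nn p) p.1 q.1].

Lemma Leq_Inv p q : Leq E p q -> Inv p q.
Proof.
elim => {p q} [p q gl | p | p q _ IH | p q r _ IH1 _ IH2].
- right; have LL := glue_Lab gl; case: p q gl LL => [a v] [b w] [/= Eab vp vq [vw v0] _] LL.
  split => //; apply: connect1; rewrite /nn /= Eab /= Lab_own //.
- by left.
- case: IH => [->|[vp vq LL cc]]; first by left.
  right; split => //; first by move=> g h Egh; rewrite LL.
  rewrite (eq_connect (eq_nn LL)) (sym_connect_sym (nn_sym q)) in cc.
  exact: cc.
- case: IH1 => [->//|[vp vq L1 c1]]; case: IH2 => [<-|[_ vr L2 c2]]; first by right.
  right; split => //; first by move=> g h Egh; rewrite L1 // L2.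
  by apply: connect_trans c1 _; rewrite (eq_connect (eq_nn L1)).
Qed.

Lemma Leq_Lab p q : Leq E p q -> valid p ->
  valid q /\ (forall g h, E g h -> Lab p g h = Lab q g h).
Proof. by move/Leq_Inv => [->|[]]. Qed.

Lemma Leq_conn p q : Leq E p q -> valid p -> connect (nn p) p.1 q.1.
Proof. by move/Leq_Inv => [-> _|[]] //; apply: connect0. Qed.

Lemma inL_self (x : pt) : valid x -> inL E x x.1.
Proof. by case: x => a v vx; exists v; split => //; apply: rst_refl. Qed.

Lemma inL_rep (x : pt) a : valid x -> inL E x a -> exists v : T -> R,
  [/\ valid (a, v), Leq E (a, v) x & forall g h, E g h -> Lab (a, v) g h = Lab x g h].
Proof.
move=> vx [v [va L]]; exists v; split => //.
by case: (Leq_Lab L va).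
Qed.

Definition swapv (v : T -> R) (g h : T) : T -> R :=
  fun k => if k == h then 0 else if k == g then v h else v k.

Lemma step (x : pt) g h : valid x -> inL E x g -> E g h -> 0 <= Lab x g h -> inL E x h.
Proof.
move=> vx /(inL_rep vx) [v [vg L LL]] Egh.
rewrite -LL // Lab_own // => vh.
have gh : (g == h) = false by apply/negbTE/eqP => e; rewrite e Eirr in Egh.
exists (swapv v g h); split; first by rewrite /valid /swapv /= eqxx.
apply: rst_trans L; apply: rst_sym; apply: rst_step.
split => //=; first by rewrite /valid /swapv /= eqxx.
  by rewrite /swapv gh eqxx.
by move=> k kg kh; rewrite /swapv (negbTE kg) (negbTE kh).
Qed.

Lemma Lab_nonneg (x : pt) a b : valid x -> inL E x a -> inL E x b -> E a b -> 0 <= Lab x a b.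
Proof.
move=> vx /(inL_rep vx) [v [va La LLa]] /(inL_rep vx) [w [wb Lb LLb]] Eab.
rewrite leNgt; apply/negP => neg.
have L : Leq E (a, v) (b, w) by exact: (rst_trans _ _ _ _ _ La (rst_sym _ _ _ _ Lb)).
have := Leq_conn L va; rewrite /= => cc.
have : connect (Em a b) a b.
  apply: connect_sub cc => u z /= /andP [Euz nz]; apply: connect1.
  have Eba : E b a by rewrite Esym.
  rewrite /A.Em /= Euz /=; apply/negP => /orP [] /andP [/eqP eu /eqP ez];
    move: nz; rewrite eu ez.
    by rewrite LLa // leNgt neg.
  by rewrite LLa // (Lab_sym _ Eba) leNgt neg.
by rewrite (negbTE (t2 Eab)).
Qed.

Lemma contrP (x : pt) a b : valid x ->
  (contracted E x a b <-> [/\ E a b, inL E x a, inL E x b & 0 < Lab x a b]).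
Proof.
move=> vx; split.
  move=> [Eab ia ib [v [w [[va wb] La Lb vw vb]]]]; split => //.
  by have [_ LL] := Leq_Lab La va; rewrite -LL // Lab_own.
move=> [Eab ia ib pos]; split => //.
have [v [va La LLa]] := inL_rep vx ia; have [w [wb Lb LLb]] := inL_rep vx ib.
exists v, w; split => //.
- have Eba : E b a by rewrite Esym.
  by rewrite -(Lab_own v Eab) -[w a](Lab_own w Eba) LLa // LLb // Lab_sym.
- by rewrite -(Lab_own v Eab) LLa.
Qed.

Lemma contr_sym (x : pt) a b : contracted E x a b -> contracted E x b a.
Proof.
move=> [Eab ia ib [v [w [[va wb] La Lb vw vb]]]]; split => //; first by rewrite Esym.
by exists w, v; split => //; rewrite -vw.
Qed.

Lemma rst_contr_edge (x : pt) a b : E a b ->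
  clos_refl_sym_trans T (contracted E x) a b -> contracted E x a b.
Proof.
move=> Eab rr; case: (classic (contracted E x a b)) => // nc; exfalso.
have : connect (Em a b) a b.
  apply: rst_connect rr; first exact: Em_sym.
  move=> u z cuz; have [Euz _ _ _] := cuz.
  rewrite /A.Em /= Euz /=; apply/negP => /orP [] /andP [/eqP eu /eqP ez].
    by apply: nc; rewrite -eu -ez.
  by apply: nc; apply: contr_sym; rewrite -eu -ez.
by rewrite (negbTE (t2 Eab)).
Qed.


Lemma rst_mono (r r' : T -> T -> Prop) x y : (forall u v, r u v -> r' u v) ->
  clos_refl_sym_trans T r x y -> clos_refl_sym_trans T r' x y.
Proof.
move=> H; elim => [u v /H|u|u v _ h|u v w _ h1 _ h2].
- exact: rst_step.
- exact: rst_refl.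
- exact: rst_sym.
- exact: rst_trans h1 h2.
Qed.

Definition cfun (S : {set T}) (P : {set {set T}}) g h : R :=
  if (g \in S) && (h \in S) then (if pblock P g == pblock P h then 1 else 0)
  else if (g \in S) || (h \in S) then -1 else 0.

Lemma cfunC S P g h : cfun S P g h = cfun S P h g.
Proof. by rewrite /cfun andbC orbC [pblock P h == _]eq_sym. Qed.

Lemma cfun_le1 S P g h : `|cfun S P g h| <= 1.
Proof. rewrite /cfun; case: ifP => _; [case: ifP => _|case: ifP => _]; by rewrite ?normrN ?normr1 ?normr0 ?ler01. Qed.

Definition pert S P a0 (v0 : T -> R) (d : R) : T -> R :=
  fun g => v0 g + d * (if [pick h | E g h && connect (Em g h) a0 h] is Some h
                       then cfun S P g h else 0).

Lemma pert_valid S P a0 v0 d : valid (a0, v0) -> valid (a0, pert S P a0 v0 d).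
Proof.
rewrite /valid /pert /= => ->; case: pickP => [h /andP [Eh ch]|_].
  by have := t2 Eh; rewrite ch.
by rewrite mulr0 addr0.
Qed.

Lemma pert_close S P a0 v0 d : 0 <= d -> forall g, `|pert S P a0 v0 d g - v0 g| <= d.
Proof.
move=> d0 g; rewrite /pert addrC addKr normrM ger0_norm //.
case: pickP => [h _|_]; last by rewrite normr0 mulr0.
by rewrite -[leRHS]mulr1 ler_wpM2l // cfun_le1.
Qed.

Lemma pert_Lab S P a0 v0 (d : R) g h : E g h ->
  Lab (a0, pert S P a0 v0 d) g h = Lab (a0, v0) g h + d * cfun S P g h.
Proof.
move=> Egh; rewrite /Lab /= /pert; case: ifP => c1.
  case: pickP => [h' /andP [Eh' ch']|/(_ h)]; last by rewrite Egh c1.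
  by rewrite (nu Eh' Egh ch' c1).
have Ehg : E h g by rewrite Esym.
have c2 : connect (Em h g) a0 g by rewrite -connEmC; have := t1 a0 Egh; rewrite c1 orbF.
case: pickP => [h' /andP [Eh' ch']|/(_ g)]; last by rewrite Ehg c2.
by rewrite (nu Eh' Ehg ch' c2) cfunC.
Qed.

Lemma corr_facts S P : is_corr E S P ->
  [/\ subtree E S, cover P = S, trivIset P, set0 \notin P &
      forall B, B \in P -> subtree E B].
Proof.
by case=> sS /and3P [/eqP cP tP nP] sB; split.
Qed.

Lemma build S P a0 v0 (d : R) : is_corr E S P -> a0 \in S -> valid (a0, v0) -> 0 < d ->
  (forall g h, E g h -> g \in S -> h \in S -> pblock P g = pblock P h -> 0 <= Lab (a0, v0) g h) ->
  (forall g h, E g h -> g \in S -> h \in S -> pblock P g != pblock P h -> Lab (a0, v0) g h = 0) ->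
  (forall g h, E g h -> g \in S -> h \notin S -> Lab (a0, v0) g h <= 0) ->
  stratum R E S P (a0, pert S P a0 v0 d).
Proof.
move=> hp a0S va0 d0 H1 H2 H3.
have [[_ sS] cP tP nP sB] := corr_facts hp.
set y := (a0, pert S P a0 v0 d).
have vy : valid y by apply: pert_valid.
have Ls1 g h : E g h -> g \in S -> h \in S -> pblock P g = pblock P h -> 0 < Lab y g h.
  move=> Egh gS hS pe; rewrite pert_Lab // /cfun gS hS pe eqxx mulr1.
  by apply: ltr_wpDl (H1 _ _ Egh gS hS pe) d0.
have Ls2 g h : E g h -> g \in S -> h \in S -> pblock P g != pblock P h -> Lab y g h = 0.
  move=> Egh gS hS pe; rewrite pert_Lab // /cfun gS hS (negbTE pe) mulr0 addr0.
  exact: H2.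
have Ls3 g h : E g h -> g \in S -> h \notin S -> Lab y g h < 0.
  move=> Egh gS hS; rewrite pert_Lab // /cfun gS (negbTE hS) /= mulrN1.
  by rewrite subr_lt0; apply: le_lt_trans (H3 _ _ Egh gS hS) d0.
have inS a : a \in S -> inL E y a.
  move=> aS; have cc := sS _ _ a0S aS.
  apply: (conn_closed (Pr := inL E y)) cc _ => [u v /and3P [Euv uS vS] iu|].
    apply: (step vy iu Euv).
    case: (eqVneq (pblock P u) (pblock P v)) => pe.
      by apply: ltW; apply: Ls1 Euv uS vS pe.
    by rewrite (Ls2 _ _ Euv uS vS pe).
  exact: (inL_self vy).
have Sin a : inL E y a -> a \in S.
  move=> /(inL_rep vy) [w [wa La _]].
  have := Leq_conn (rst_sym _ _ _ _ La) vy; rewrite /= => cc.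
  apply: (conn_closed (Pr := fun z => is_true (z \in S))) cc a0S => u v /andP [Euv nz] uS.
  apply/negPn/negP => vS; have := Ls3 _ _ Euv uS vS; by rewrite ltNge nz.
split => //; first by move=> a; split; [apply: inS|apply: Sin].
move=> a b aS bS; split.
  move=> [B BP /andP [aB bB]].
  have [_ sBB] := sB _ BP.
  apply: (rst_mono (r := fun u v => is_true (induced E B u v))); last first.
    exact: connect_rst (sBB _ _ aB bB).
  move=> u v /and3P [Euv uB vB].
  have BS : B \subset S by rewrite -cP; apply: bigcup_sup.
  have uS := subsetP BS _ uB; have vS := subsetP BS _ vB.
  apply/(contrP _ _ vy); split; [by []|exact: inS|exact: inS|].
  by apply: (Ls1 _ _ Euv uS vS); rewrite (def_pblock tP BP uB) (def_pblock tP BP vB).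
move=> rr.
have : pblock P a = pblock P b.
  elim: rr {aS bS} => [u v|u|u v _ ->|u v w _ -> _ ->] //.
  move/(contrP _ _ vy) => [Euv /Sin uS /Sin vS pos].
  case: (eqVneq (pblock P u) (pblock P v)) => // pe.
  by move: pos; rewrite (Ls2 _ _ Euv uS vS pe) ltxx.
move=> pe; exists (pblock P a); first by apply: pblock_mem; rewrite cP.
by rewrite mem_pblock pe mem_pblock cP aS bS.
Qed.

End Arb.


Set Implicit Arguments. Unset Strict Implicit. Unset Printing Implicit Defensive.
Import Order.TTheory GRing.Theory Num.Theory.
Local Open Scope ring_scope.

Section Main.
Variable R : realType.
Variable T : finType.
Variable E : rel T.
Hypothesis Esym : symmetric E.
Hypothesis Eirr : irreflexive E.
Hypothesis Econn : forall x y, connect E x y.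
Hypothesis Eacyc : forall c : seq T, uniq c -> (2 < size c)%N -> ~~ cycle E c.

Notation pt := (prept R T).
Notation Lab := (@Lab R T E).
Let contrP_ := @contrP R T E Esym Eirr Econn Eacyc.
Let step_ := @step R T E Esym Eirr Econn Eacyc.
Let inL_rep_ := @inL_rep R T E Esym Eirr Econn Eacyc.
Let Lab_nonneg_ := @Lab_nonneg R T E Esym Eirr Econn Eacyc.
Let pert_valid_ := @pert_valid R T E Esym Eirr Eacyc.
Let build_ := @build R T E Esym Eirr Econn Eacyc.

Lemma blockP S' P' (x : pt) a b : trivIset P' -> cover P' = S' ->
  stratum R E S' P' x -> a \in S' -> b \in S' ->
  (pblock P' a = pblock P' b <-> clos_refl_sym_trans T (contracted E x) a b).
Proof.
move=> tP' cP' [_ _ HB] aS bS; rewrite -(HB a b aS bS); split.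
  move=> pe; exists (pblock P' a); first by apply: pblock_mem; rewrite cP'.
  by rewrite mem_pblock pe mem_pblock cP' aS bS.
by move=> [B BP /andP [aB bB]]; rewrite (def_pblock tP' BP aB) (def_pblock tP' BP bB).
Qed.

Lemma fwd S P S' P' : is_corr E S P -> is_corr E S' P' -> corr_ge E S P S' P' ->
  forall x, stratum R E S' P' x -> Lclosure E (stratum R E S P) x.
Proof.
move=> hp hp' [Q [Pi [QP' hq eS eP]]] x sx.
have [vx HS' _] := sx.
have [[nS sS] cP tP nP sB] := corr_facts hp.
have [_ cP' tP' nP' sB'] := corr_facts hp'.
have [_ /and3P [/eqP cPi tPi nPi] _] := hq.
have SS' a : a \in S -> a \in S'.
  rewrite eS => /bigcupP [B BQ aB]; rewrite -cP'; apply/bigcupP; exists B => //.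
  exact: subsetP QP' _ BQ.
have pbQ a : a \in S -> pblock P' a \in Q.
  by rewrite eS => /bigcupP [B BQ aB]; rewrite (def_pblock tP' (subsetP QP' _ BQ) aB).
have G2 a b : a \in S -> b \in S' -> pblock P' a = pblock P' b -> b \in S.
  move=> aS bS' pe; rewrite eS; apply/bigcupP; exists (pblock P' a); first exact: pbQ.
  by rewrite pe mem_pblock cP'.
have G3 a b : a \in S -> b \in S -> pblock P' a = pblock P' b -> pblock P a = pblock P b.
  move=> aS bS pe; have BQ := pbQ _ aS.
  have : pblock P' a \in cover Pi by rewrite cPi.
  move=> /bigcupP [pi piPi Bpi].
  have cpi : cover pi \in P by rewrite eP; apply: imset_f.
  have a_in : a \in cover pi.
    by apply/bigcupP; exists (pblock P' a) => //; rewrite mem_pblock cP'; exact: SS'.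
  have b_in : b \in cover pi.
    by apply/bigcupP; exists (pblock P' a) => //; rewrite pe mem_pblock cP'; exact: SS'.
  by rewrite (def_pblock tP cpi a_in) (def_pblock tP cpi b_in).
have inS' a : a \in S' -> inL E x a by move/(HS' a).
have G4 a b : E a b -> a \in S' -> b \in S' -> 0 <= Lab x a b.
  by move=> Eab aS bS; apply: Lab_nonneg_ => //; apply: inS'.
have G5 a b : E a b -> a \in S -> b \notin S -> Lab x a b <= 0.
  move=> Eab aS bS; rewrite leNgt; apply/negP => pos.
  case: (boolP (b \in S')) => bS'.
    have : ~ contracted E x a b.
      move=> /(rst_step T) /(blockP tP' cP' sx (SS' _ aS) bS') pe.
      by move: bS; rewrite (G2 _ _ aS bS' pe).
    apply; apply/(contrP_ _ _ vx); split => //; [apply: inS'; exact: SS' | exact: inS'].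
  move/negP: bS'; apply; apply/(HS' b).
  by apply: (step_ vx (inS' _ (SS' _ aS)) Eab); apply: ltW.
have G6 a b : E a b -> a \in S -> b \in S -> pblock P a != pblock P b -> Lab x a b = 0.
  move=> Eab aS bS pe; apply/eqP; rewrite eq_le G4 ?SS' // andbT leNgt; apply/negP => pos.
  have c : contracted E x a b.
    by apply/(contrP_ _ _ vx); split => //; apply: inS'; apply: SS'.
  move/(rst_step T)/(blockP tP' cP' sx (SS' _ aS) (SS' _ bS)): c => pe'.
  by move: pe; rewrite (G3 _ _ aS bS pe') eqxx.
split => // U [Usat Uch] Ux.
have [a0 a0S] := set0Pn _ nS.
have [v0 [va0 L0 LL0]] := inL_rep_ vx (inS' _ (SS' _ a0S)).
have U0 : U (a0, v0) by apply: Usat Ux; apply: rst_sym.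
have [eps e0 ball] := Uch a0 v0 va0 U0.
have d0 : 0 < eps / 2 by rewrite divr_gt0.
exists (a0, pert E S P a0 v0 (eps / 2)); split.
- exact: pert_valid_.
- apply: ball; first exact: (pert_valid_ _ _ _ va0).
  move=> g; have := pert_close E S P a0 v0 (ltW d0) g.
  by move=> h; apply: le_lt_trans h _; rewrite ltr_pdivrMr // ltr_pMr // ltr1n.
apply: (build_ hp a0S va0 d0).
- by move=> g h Egh gS hS _; rewrite LL0 // G4 // SS'.
- by move=> g h Egh gS hS pe; rewrite LL0 // G6.
- by move=> g h Egh gS hS; rewrite LL0 // G5.
Qed.

End Main.


Set Implicit Arguments. Unset Strict Implicit. Unset Printing Implicit Defensive.
Import Order.TTheory GRing.Theory Num.Theory.
Local Open Scope ring_scope.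

Lemma unif (R : realType) (I : finType) (Q : I -> R -> Prop) :
  (forall i d d', 0 < d' -> d' <= d -> Q i d -> Q i d') ->
  (forall i, exists2 d, 0 < d & Q i d) -> exists2 d, 0 < d & forall i, Q i d.
Proof.
move=> mono H.
suff [d d0 Hd] : exists2 d, 0 < d & forall i, i \in enum I -> Q i d.
  by exists d => // i; apply: Hd; rewrite mem_enum.
elim: (enum I) => [|j s [d d0 Hd]]; first by exists 1.
have [dj dj0 Hj] := H j.
exists (Num.min d dj); first by rewrite lt_min d0 dj0.
move=> i; rewrite inE => /orP [/eqP ->|iS].
  by apply: mono Hj; rewrite ?lt_min ?d0 ?dj0 // ge_min lexx orbT.
by apply: mono (Hd _ iS); rewrite ?lt_min ?d0 ?dj0 // ge_min lexx.
Qed.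

Section Quot.
Variable T : finType.
Variable E : rel T.

Lemma quot_subtree (S' : {set T}) (P' : {set {set T}}) (X : {set T}) (Y : {set {set T}}) :
  trivIset P' -> cover P' = S' -> subtree E X -> {subset X <= S'} ->
  (forall z, z \in X -> pblock P' z \in Y) ->
  (forall B, B \in Y -> exists2 z, z \in X & B = pblock P' z) ->
  subtree (quot_adj E P') Y.
Proof.
move=> tP' cP' [nX sX] XS' H2 H3; split.
  have [z zX] := set0Pn _ nX; apply/set0Pn; exists (pblock P' z); exact: H2.
move=> B1 B2 /H3 [z1 z1X ->] /H3 [z2 z2X ->].
apply: (connect_map (r := induced E X)) (sX _ _ z1X z2X) => u v /and3P [Euv uX vX].
case: (eqVneq (pblock P' u) (pblock P' v)) => [e|ne]; [by left | right].
have uS := XS' _ uX; have vS := XS' _ vX.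
rewrite /induced /= !H2 // !andbT /quot_adj /= ne !pblock_mem ?cP' //=.
apply/existsP; exists u; rewrite mem_pblock cP' uS /=.
by apply/existsP; exists v; rewrite mem_pblock cP' vS Euv.
Qed.

Lemma sel_rep (P' : {set {set T}}) (X : {set T}) B :
  trivIset P' -> set0 \notin P' ->
  B \in [set C in P' | C \subset X] -> exists2 z, z \in X & B = pblock P' z.
Proof.
move=> tP' nP'; rewrite inE => /andP [BP BX].
have : B != set0 by apply: contraNneq nP' => <-.
move=> /set0Pn [z zB]; exists z; first exact: subsetP BX _ zB.
by rewrite (def_pblock tP' BP zB).
Qed.

End Quot.

Section Bwd.
Variable R : realType.
Variable T : finType.
Variable E : rel T.
Hypothesis Esym : symmetric E.
Hypothesis Eirr : irreflexive E.
Hypothesis Econn : forall x y, connect E x y.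
Hypothesis Eacyc : forall c : seq T, uniq c -> (2 < size c)%N -> ~~ cycle E c.

Notation pt := (prept R T).
Notation Lab := (@Lab R T E).
Let contrP_ := @contrP R T E Esym Eirr Econn Eacyc.
Let step_ := @step R T E Esym Eirr Econn Eacyc.
Let inL_rep_ := @inL_rep R T E Esym Eirr Econn Eacyc.
Let Leq_Lab_ := @Leq_Lab R T E Esym Eirr Econn Eacyc.
Let Leq_conn_ := @Leq_conn R T E Esym Eirr Econn Eacyc.
Let rce_ := @rst_contr_edge R T E Esym Eirr Eacyc.

Lemma bwd_facts S P S' P' (x : pt) :
  is_corr E S P -> is_corr E S' P' -> stratum R E S' P' x ->
  Lclosure E (stratum R E S P) x ->
  {subset S <= S'} /\
  (forall a b, E a b -> a \in S -> b \in S' -> pblock P' a = pblock P' b ->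
     b \in S /\ pblock P a = pblock P b).
Proof.
move=> hp hp' sx [_ Hcl].
have [vx HS' HB'] := sx.
have [[nS sS] cP tP nP sB] := corr_facts hp.
have [_ cP' tP' nP' sB'] := corr_facts hp'.
have [eps e0 He] : exists2 eps : R, 0 < eps & forall gh : T * T,
    E gh.1 gh.2 -> Lab x gh.1 gh.2 != 0 -> eps <= `|Lab x gh.1 gh.2|.
  apply: (unif (Q := fun gh d => E gh.1 gh.2 -> Lab x gh.1 gh.2 != 0 -> d <= `|Lab x gh.1 gh.2|)).
    by move=> i d d' _ dd H a b; apply: le_trans dd (H a b).
  move=> [g h] /=; case: (eqVneq (Lab x g h) 0) => [->|ne].
    by exists 1 => //; rewrite eqxx.
  by exists `|Lab x g h| => //; rewrite normr_gt0.
pose U (p : pt) := [/\ valid p, p.1 \in S' &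
   forall g h, E g h -> `|Lab p g h - Lab x g h| < eps].
have Usat : forall p q, Leq E p q -> U p -> U q.
  move=> p q L [vp pS near].
  have [vq LL] := Leq_Lab_ L vp.
  split => //.
    apply: (conn_closed (Pr := fun z => is_true (z \in S'))) (Leq_conn_ L vp) pS.
    move=> u v /andP [Euv nz] uS; apply/negPn/negP => vS.
    have neg : Lab x u v < 0.
      rewrite ltNge; apply/negP => nn; move/negP: vS; apply; apply/(HS' v).
      by apply: (step_ vx _ Euv nn); apply/(HS' u).
    have := near _ _ Euv; rewrite ltNge => /negP; apply.
    have nz0 : Lab x u v != 0 by rewrite neq_lt neg.
    apply: le_trans (He (u, v) Euv nz0) _ => /=.
    rewrite ltr0_norm // ler_normr; apply/orP; left.
    by rewrite -subr_ge0 opprK subrK.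
  by move=> g h Egh; rewrite -LL //; apply: near.
have Uop : Lopen E U.
  split => // a v va [_ aS near].
  have [eta eta0 Heta] : exists2 eta : R, 0 < eta & forall gh : T * T,
      E gh.1 gh.2 -> `|Lab (a, v) gh.1 gh.2 - Lab x gh.1 gh.2| + eta <= eps.
    apply: (unif (Q := fun gh d => E gh.1 gh.2 ->
        `|Lab (a, v) gh.1 gh.2 - Lab x gh.1 gh.2| + d <= eps)).
      by move=> i d d' _ dd H Eg; apply: le_trans (H Eg); rewrite lerD2l.
    move=> [g h] /=; case Egh: (E g h); last by exists 1.
    exists (eps - `|Lab (a, v) g h - Lab x g h|); first by rewrite subr_gt0 near.
    by rewrite addrC subrK.
  exists eta => // w wa close; split => //.
  move=> g h Egh.
  have H1 : `|Lab (a, w) g h - Lab (a, v) g h| < eta.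
    by rewrite /Lab /=; case: ifP => _; apply: close.
  have -> : Lab (a, w) g h - Lab x g h =
    (Lab (a, w) g h - Lab (a, v) g h) + (Lab (a, v) g h - Lab x g h) by rewrite addrA subrK.
  apply: le_lt_trans (ler_normD _ _) _.
  by rewrite addrC; apply: lt_le_trans (Heta (g, h) Egh); rewrite ltrD2l.
have Ux : U x.
  split => //; first by apply/(HS' x.1); apply: inL_self.
  by move=> g h _; rewrite subrr normr0.
have [y [vy Uy sy]] := Hcl U Uop Ux.
have [_ HS HB] := sy.
have SS' : {subset S <= S'}.
  move=> a /(HS a) /(inL_rep_ vy) [w [wa La _]].
  by have [] := Usat _ _ (rst_sym _ _ _ _ La) Uy.
split => // a b Eab aS bS' pe.
have rr := (blockP tP' cP' sx (SS' _ aS) bS').1 pe.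
have /(contrP_ _ _ vx) [_ _ _ posx] := rce_ Eab rr.
have posy : 0 < Lab y a b.
  have ee : eps <= Lab x a b.
    by have := He (a, b) Eab (lt0r_neq0 posx); rewrite /= gtr0_norm.
  have [_ _ nr] := Uy; have := nr _ _ Eab.
  rewrite ltr_distl => /andP [l _]; apply: le_lt_trans l; by rewrite subr_ge0.
have bS : b \in S.
  apply/(HS b); apply: (step_ vy _ Eab (ltW posy)); exact/(HS a).
split => //.
have cy : contracted E y a b.
  by apply/(contrP_ _ _ vy); split => //; [apply/(HS a) | apply/(HS b)].
exact: (blockP tP cP sy aS bS).2 (rst_step _ _ _ _ cy).
Qed.

End Bwd.

Section Comb.
Variable T : finType.
Variable E : rel T.

Lemma corr_from S P S' P' : is_corr E S P -> is_corr E S' P' ->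
  {subset S <= S'} ->
  (forall a b, E a b -> a \in S -> b \in S' -> pblock P' a = pblock P' b ->
     b \in S /\ pblock P a = pblock P b) ->
  corr_ge E S P S' P'.
Proof.
move=> hp hp' SS' F2.
have [[nS sS] cP tP nP sB] := corr_facts hp.
have [_ cP' tP' nP' sB'] := corr_facts hp'.
have K x0 z : x0 \in S -> z \in pblock P' x0 -> z \in S /\ pblock P z = pblock P x0.
  move=> x0S zB.
  have BP : pblock P' x0 \in P' by apply: pblock_mem; rewrite cP' SS'.
  have x0B : x0 \in pblock P' x0 by rewrite mem_pblock cP' SS'.
  have [_ sBB] := sB' _ BP.
  apply: (conn_closed (Pr := fun z => z \in S /\ pblock P z = pblock P x0)) (sBB _ _ x0B zB) _ => //.
  move=> u v /and3P [Euv uB vB] [uS pu].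
  have vS' : v \in S' by rewrite -cP'; apply/bigcupP; exists (pblock P' x0).
  have [] := F2 u v Euv uS vS'.
    by rewrite (def_pblock tP' BP uB) (def_pblock tP' BP vB).
  by move=> vS <-.
pose piC (C : {set T}) := [set B in P' | B \subset C].
have CS C : C \in P -> C \subset S by move=> CP; rewrite -cP; apply: bigcup_sup.
have pb_in C z : C \in P -> z \in C -> pblock P' z \in piC C.
  move=> CP zC; have zS := subsetP (CS _ CP) _ zC.
  rewrite inE pblock_mem ?cP' ?SS' //=; apply/subsetP => u uB.
  have [uS pu] := K _ _ zS uB.
  by rewrite -(def_pblock tP CP zC) -pu mem_pblock cP.
have cover_pi C : C \in P -> cover (piC C) = C.
  move=> CP; apply/setP => z; apply/bigcupP/idP.
    by move=> [B]; rewrite inE => /andP [_ /subsetP BC] /BC.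
  move=> zC; exists (pblock P' z); first exact: pb_in.
  by rewrite mem_pblock cP' SS' // (subsetP (CS _ CP)).
have pbQ z : z \in S -> pblock P' z \in [set B in P' | B \subset S].
  move=> zS; rewrite inE pblock_mem ?cP' ?SS' //=; apply/subsetP => u uB.
  by have [] := K _ _ zS uB.
exists [set B in P' | B \subset S], [set piC C | C in P]; split.
- by apply/subsetP => B; rewrite inE => /andP [].
- split.
  + apply: (quot_subtree tP' cP' (conj nS sS)) => //.
    by move=> B /(sel_rep tP' nP').
  + apply/and3P; split.
    * apply/eqP/setP => B; apply/bigcupP/idP.
        move=> [pi /imsetP [C CP ->]]; rewrite !inE => /andP [BP BC].
        by rewrite BP /=; apply: subset_trans BC (CS _ CP).
      move=> BQ; have [z zS ->] := sel_rep tP' nP' BQ.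
      exists (piC (pblock P z)); first by apply: imset_f; apply: pblock_mem; rewrite cP.
      by apply: pb_in; [apply: pblock_mem; rewrite cP | rewrite mem_pblock cP].
    * apply/trivIsetP => _ _ /imsetP [C1 C1P ->] /imsetP [C2 C2P ->] ne.
      rewrite -setI_eq0; apply/eqP/setP => B; rewrite !inE.
      apply/negbTE/negP => /andP [/andP [BP BC1] /andP [_ BC2]].
      have : B != set0 by apply: contraNneq nP' => <-.
      move=> /set0Pn [z zB].
      have e1 := def_pblock tP C1P (subsetP BC1 _ zB).
      have e2 := def_pblock tP C2P (subsetP BC2 _ zB).
      by move: ne; rewrite -e1 -e2 eqxx.
    * apply/imsetP => [[C CP e]].
      have : C != set0 by apply: contraNneq nP => <-.
      move=> /set0Pn [z zC]; have := pb_in _ _ CP zC; by rewrite -e inE.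
  + move=> _ /imsetP [C CP ->].
    apply: (quot_subtree tP' cP' (sB _ CP)) => //.
    * by move=> z zC; apply: SS'; apply: (subsetP (CS _ CP)).
    * by move=> z; apply: pb_in.
    * by move=> B /(sel_rep tP' nP').
- apply/setP => z; apply/idP/bigcupP.
    by move=> zS; exists (pblock P' z); [apply: pbQ | rewrite mem_pblock cP' SS'].
  by move=> [B]; rewrite inE => /andP [_ /subsetP BS] /BS.
- rewrite -imset_comp (eq_in_imset (g := id)) ?imset_id //.
Qed.

End Comb.


Set Implicit Arguments. Unset Strict Implicit. Unset Printing Implicit Defensive.
Import Order.TTheory GRing.Theory Num.Theory.
Local Open Scope ring_scope.

Lemma strat_ne (R : realType) (T : finType) (E : rel T) (Esym : symmetric E)
  (Eirr : irreflexive E) (Econn : forall x y, connect E x y)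
  (Eacyc : forall c : seq T, uniq c -> (2 < size c)%N -> ~~ cycle E c) S P :
  is_corr E S P -> exists x : prept R T, stratum R E S P x.
Proof.
move=> hp; have [[nS _] _ _ _ _] := corr_facts hp.
have [a0 a0S] := set0Pn _ nS.
have L0 g h : Lab E (a0, fun _ : T => (0 : R)) g h = 0 by rewrite /Lab; case: ifP.
exists (a0, pert E S P a0 (fun _ => 0) 1).
apply: (build Esym Eirr Econn Eacyc hp a0S) => //.
- by move=> g h *; rewrite L0.
- by move=> g h *; rewrite L0.
Qed.

Theorem proposition2p18 (R : realType) (T : finType) (E : rel T)
    (hT : is_tree E)
    (S : {set T}) (P : {set {set T}}) (S' : {set T}) (P' : {set {set T}})
    (hp : is_corr E S P) (hp' : is_corr E S' P') :
  (corr_ge E S P S' P' <->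
     exists x, stratum R E S' P' x /\ Lclosure E (stratum R E S P) x) /\
  (corr_ge E S P S' P' ->
     forall x, stratum R E S' P' x -> Lclosure E (stratum R E S P) x).
Proof.
have [_ Esym Eirr Econn Eacyc] := hT.
have part2 := fwd Esym Eirr Econn Eacyc hp hp'.
split; last exact: part2.
split.
  move=> cg; have [x sx] := @strat_ne R T E Esym Eirr Econn Eacyc _ _ hp'.
  by exists x; split => //; apply: part2.
move=> [x [sx cl]].
have [SS' F2] := bwd_facts Esym Eirr Econn Eacyc hp hp' sx cl.
exact: corr_from hp hp' SS' F2.
Qed.
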